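(* Let $\kappa>0$ and $\delta_s=\kappa\sqrt s$. For $0\le s\le t<1/\kappa^2$ and $x\in\mathbb R$ define $\phi_{s|t}(x)=\frac{1-\delta_s}{1-\delta_t}x$ if $x\in[\delta_t-1,1-\delta_t]$; $\phi_{s|t}(x)=\sqrt{s/t}\,x-(1-\sqrt{s/t})$ if $x\le\delta_t-1$; $\phi_{s|t}(x)=\sqrt{s/t}\,x+(1-\sqrt{s/t})$ if $x\ge1-\delta_t$. Then for every $t\in(0,1/\kappa^2)$ and $x\in\mathbb R$, the map $s\mapsto x_s:=\phi_{s|t}(x)$ is continuous on $[0,t]$, satisfies $x_t=x$, and solves $\frac{d}{ds}x_s=-\frac12\hat s_{s,\delta_s}(x_s)$ for all $s\in(0,t)$; moreover the trajectory stays in the same region ($x_s\le\delta_s-1$, $x_s\ge1-\delta_s$, or $x_s\in[\delta_s-1,1-\delta_s]$, respectively) for all $s\in(0,t]$. In particular $\phi_{0|t}(x)=x/(1-\delta_t)$ if $x\in[\delta_t-1,1-\delta_t]$ and $\phi_{0|t}(x)=\mathrm{sgn}(x)$ otherwise.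
   Context: Smoothed PL-ESF (training set $\{-1,1\}$), for $\delta\in(0,1)$ and $t>0$: $\hat s_{t,\delta}(x)=-(x+1)/t$ if $x\le\delta-1$; $-(x-1)/t$ if $x\ge1-\delta$; $\frac{\delta}{1-\delta}\cdot\frac xt$ if $x\in(\delta-1,1-\delta)$. *)

(* Defs.v *)
From HB Require Import structures.
From mathcomp Require Import all_boot all_order all_algebra.
From mathcomp Require Import all_classical all_reals all_analysis.
Set Implicit Arguments. Unset Strict Implicit. Unset Printing Implicit Defensive.
Import Order.TTheory GRing.Theory Num.Theory.
Import numFieldNormedType.Exports.
Local Open Scope ring_scope.

(* Smoothed PL-ESF \hat s_{t,delta}(x) (training set {-1,1}). *)
Definition shat {R : realType} (t delta x : R) : R :=
  if x <= delta - 1 then - (x + 1) / t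
  else if 1 - delta <= x then - (x - 1) / t
  else delta / (1 - delta) * (x / t).

Definition dlt {R : realType} (kappa s : R) : R := kappa * Num.sqrt s.

(* phi_{s|t}(x); the three cases agree on the overlapping boundary points. *)
Definition phi {R : realType} (kappa s t x : R) : R :=
  if x <= dlt kappa t - 1 then Num.sqrt (s / t) * x - (1 - Num.sqrt (s / t))
  else if 1 - dlt kappa t <= x then Num.sqrt (s / t) * x + (1 - Num.sqrt (s / t))
  else (1 - dlt kappa s) / (1 - dlt kappa t) * x.

(* Main.v *)
Require Import Defs.
From HB Require Import structures.
From mathcomp Require Import all_boot all_order all_algebra.
From mathcomp Require Import all_classical all_reals all_analysis.
From mathcomp Require Import ring lra.
Import Order.TTheory GRing.Theory Num.Theory.
Import numFieldNormedType.Exports.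
Local Open Scope classical_set_scope.
Local Open Scope ring_scope.

Lemma cont_aff (R : realType) (A B : R) : continuous (fun u : R => A * Num.sqrt u + B).
Proof.
move=> u. apply: cvgD; last exact: cvg_cst.
apply: cvgM; first exact: cvg_cst. exact: sqrt_continuous.
Qed.

Lemma der_aff (R : realType) (A B s : R) : 0 < s ->
  is_derive s 1 (fun u : R => A * Num.sqrt u + B) (A * (2 * Num.sqrt s)^-1).
Proof.
move=> s0.
have h := is_derive1_sqrt s0.
apply: is_derive_eq.
Unshelve. all: try exact _.
by rewrite addr0.
Qed.

Lemma sqrt_div (R : realType) (t u : R) : 0 < t -> Num.sqrt (u / t) = Num.sqrt u / Num.sqrt t.
Proof.
move=> t0; case: (leP 0 u) => hu.
  by rewrite sqrtrM // sqrtrV // ltW.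
rewrite (ltr0_sqrtr hu) mul0r ltr0_sqrtr //. by rewrite pmulr_llt0 ?invr_gt0.
Qed.

Lemma sqrt_sq (R : realType) (s : R) : 0 < s ->
  exists2 r, 0 < r & Num.sqrt s = r /\ s = r ^+ 2.
Proof.
move=> s0; exists (Num.sqrt s); first by rewrite sqrtr_gt0.
by split => //; rewrite sqr_sqrtr // ltW.
Qed.

Lemma foo8 (R : realType) (y : R) : y^+2 < 1 -> 0 < y -> y < 1.
Proof. move=> *. nra. Qed.
Ltac neg h := move/negbT: h; rewrite -ltNge => h.

Theorem mainTheorem5 (R : realType) (kappa t x : R) :
  0 < kappa -> 0 < t -> t < 1 / kappa ^+ 2 ->
  {within `[0, t], continuous (fun s => phi kappa s t x)} /\
      phi kappa t t x = x /\
      (forall s, 0 < s < t ->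
         is_derive s (1 : R) (fun u => phi kappa u t x)
           (- (1 / 2) * shat s (dlt kappa s) (phi kappa s t x))) /\
      (x <= dlt kappa t - 1 ->
         forall s, 0 < s <= t -> phi kappa s t x <= dlt kappa s - 1) /\
      (1 - dlt kappa t <= x ->
         forall s, 0 < s <= t -> 1 - dlt kappa s <= phi kappa s t x) /\
      (dlt kappa t - 1 <= x <= 1 - dlt kappa t ->
         forall s, 0 < s <= t ->
           dlt kappa s - 1 <= phi kappa s t x <= 1 - dlt kappa s) /\
      ((dlt kappa t - 1 <= x <= 1 - dlt kappa t ->
          phi kappa 0 t x = x / (1 - dlt kappa t)) /\
       (~~ (dlt kappa t - 1 <= x <= 1 - dlt kappa t) ->
          phi kappa 0 t x = Num.sg x)).
Proof.
move=> k0 t0 tk.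
have st0 : 0 < Num.sqrt t by rewrite sqrtr_gt0.
have stt : Num.sqrt t ^+ 2 = t by rewrite sqr_sqrtr // ltW.
set st := Num.sqrt t in st0 stt.
have tk2 : t * kappa ^+ 2 < 1.
  by move: tk; rewrite ltr_pdivlMr // exprn_gt0.
have kst1 : kappa * st < 1.
  have kp : 0 < kappa * st by rewrite mulr_gt0.
  have h2 : (kappa * st) ^+ 2 < 1 by rewrite exprMn mulrC stt.
  exact: foo8 h2 kp.
have sle : forall s, 0 < s <= t -> 0 < Num.sqrt s <= st.
  move=> s /andP[s0 st']; rewrite sqrtr_gt0 s0 /= /st.
  by rewrite ler_sqrt // ltW.
have slt : forall s, 0 < s < t -> Num.sqrt s < st.
  move=> s /andP[s0 st']; rewrite /st ltr_sqrt //.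
rewrite /dlt -/st.
have gen : forall A B, (forall u, phi kappa u t x = A * Num.sqrt u + B) ->
    {within `[0, t], continuous (fun s => phi kappa s t x)}.
  move=> A B H; rewrite (_ : (fun s => _) = (fun u => A * Num.sqrt u + B)).
    by apply: continuous_subspaceT; exact: cont_aff.
  by apply/funext => u; rewrite H.
have gend : forall A B, (forall u, phi kappa u t x = A * Num.sqrt u + B) ->
   forall s, 0 < s < t ->
   (forall r, 0 < r -> r < st -> A * (2 * r)^-1 = - (1/2) * shat (r ^+ 2) (kappa * r) (A * r + B)) ->
         is_derive s (1 : R) (fun u => phi kappa u t x)
           (- (1 / 2) * shat s (dlt kappa s) (phi kappa s t x)).
  move=> A B H s hs Hr.
  rewrite (_ : (fun s => _) = (fun u => A * Num.sqrt u + B)); last first.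
    by apply/funext => u; rewrite H.
  have s0 : 0 < s by case/andP: hs.
  apply: is_derive_eq; first exact: der_aff.
  have := slt s hs.
  case: (@sqrt_sq _ s s0) => r r0 [sr ss].
  rewrite H /dlt sr => rst. rewrite [in shat s]ss.
  exact: Hr.
case: (leP x (kappa * st - 1)) => hx1.
  have [a xa] : exists a, x = a * st - 1.
    by exists ((x + 1) / st); rewrite divfK ?gt_eqF // addrK.
  subst x.
  have ak : a <= kappa by nra.
  have H : forall u, phi kappa u t (a * st - 1) = a * Num.sqrt u + -1.
    move=> u; rewrite /phi /dlt -/st ifT; last exact: hx1.
    by rewrite sqrt_div // -/st; field; rewrite gt_eqF.
  split; first exact: gen _ _ H.
  split; first by rewrite H.
  split.
    move=> s hs; apply: (gend _ _ H s hs) => r r0 rst.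
    rewrite /shat; case: ifP => h1.
      by field; rewrite gt_eqF.
    suff : a * r + -1 <= kappa * r - 1 by rewrite h1.
    nra.
  split.
    move=> _ s /sle/andP[r0 rst]; rewrite H; nra.
  split.
    move=> h; exfalso; nra.
  split.
    move=> /andP[h _] s /sle/andP[r0 rst]; rewrite H.
    have aeq : a = kappa by apply/eqP; rewrite eq_le ak /=; nra.
    subst a; apply/andP; split; nra.
  split.
    move=> /andP[h _]; rewrite H sqrtr0 mulr0 add0r.
    have aeq : a = kappa by apply/eqP; rewrite eq_le ak /=; nra.
    subst a; field; rewrite gt_eqF //; lra.
  move=> h; rewrite H sqrtr0 mulr0 add0r ltr0_sg //; nra.
case: (leP (1 - kappa * st) x) => hx2.
  have [a xa] : exists a, x = 1 - a * st.
    by exists ((1 - x) / st); field; rewrite gt_eqF.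
  subst x.
  have ak : a <= kappa by nra.
  have H : forall u, phi kappa u t (1 - a * st) = (- a) * Num.sqrt u + 1.
    move=> u; rewrite /phi /dlt -/st ifF; last first.
      by apply/negbTE; rewrite -ltNge.
    rewrite ifT; last exact: hx2.
    by rewrite sqrt_div // -/st; field; rewrite gt_eqF.
  split; first exact: gen _ _ H.
  split; first by rewrite H mulNr addrC.
  split.
    move=> s hs; apply: (gend _ _ H s hs) => r r0 rst.
    have kr1 : kappa * r < 1 by nra.
    rewrite /shat; case: ifP => h1.
      exfalso; nra.
    case: ifP => h2.
      by field; rewrite gt_eqF.
    suff : 1 - kappa * r <= - a * r + 1 by rewrite h2.
    nra.
  split.
    move=> h; exfalso; nra.
  split.
    move=> _ s /sle/andP[r0 rst]; rewrite H; nra.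
  split.
    move=> /andP[_ h] s /sle/andP[r0 rst]; rewrite H.
    have aeq : a = kappa by apply/eqP; rewrite eq_le ak /=; nra.
    subst a; apply/andP; split; nra.
  split.
    move=> /andP[_ h]; rewrite H sqrtr0 mulr0 add0r.
    have aeq : a = kappa by apply/eqP; rewrite eq_le ak /=; nra.
    subst a; field; rewrite gt_eqF //; lra.
  move=> h; rewrite H sqrtr0 mulr0 add0r gtr0_sg //; nra.
have [b xb] : exists b, x = b * (1 - kappa * st).
  by exists (x / (1 - kappa * st)); field; rewrite gt_eqF // subr_gt0.
subst x.
have hb1 : -1 < b by nra.
have hb2 : b < 1 by nra.
have H : forall u, phi kappa u t (b * (1 - kappa * st)) = (- (kappa * b)) * Num.sqrt u + b.
  move=> u; rewrite /phi /dlt -/st ifF; last first.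
    by apply/negbTE; rewrite -ltNge.
  rewrite ifF; last first.
    by apply/negbTE; rewrite -ltNge.
  by field; rewrite gt_eqF // subr_gt0.
split; first exact: gen _ _ H.
split; first by rewrite H -/st; ring.
split.
  move=> s hs; apply: (gend _ _ H s hs) => r r0 rst.
  have kr1 : kappa * r < 1 by nra.
  rewrite /shat; case: ifP => h1.
    exfalso; nra.
  case: ifP => h2.
    exfalso; nra.
  by field; rewrite !gt_eqF // subr_gt0.
split.
  move=> h; exfalso; nra.
split.
  move=> h; exfalso; nra.
split.
  move=> _ s /sle/andP[r0 rst]; rewrite H.
  have kr1 : kappa * Num.sqrt s <= kappa * st by nra.
  apply/andP; split; nra.
split.
  move=> _; rewrite H sqrtr0 mulr0 add0r.
  by field; rewrite gt_eqF // subr_gt0.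
move=> h; exfalso; move: h; rewrite (ltW hx1) (ltW hx2).
done.
Qed.
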